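(* Let $M=\bigoplus_{l=1}^rM(l)^{\oplus a_l}$ be a representation of the equioriented quiver $\Gamma$ of type $A_n$ with $M(1),\dots,M(r)$ pairwise non-isomorphic indecomposables, $N=a_1+\cdots+a_r$, and let $P\subseteq GL_N$ be the image of $\mathcal{P}_M$ under the embedding $\mathrm{Aut}_\Gamma(R)\hookrightarrow GL_N$ described below. Then $M$ is catenoid if and only if $P$ is a parabolic subgroup of $GL_N$. In this case (with $M(1)<M(2)<\cdots<M(r)$ and the summands indexed so that $M_1,\dots,M_{a_1}\cong M(1)$, the next $a_2$ isomorphic to $M(2)$, etc.), $P$ is the standard parabolic subgroup of $GL_N$ associated with the partition $N=a_1+\cdots+a_r$ (block upper triangular matrices with diagonal blocks of sizes $a_1,\dots,a_r$), with Levi decomposition $P=LU$ ($L$ the block-diagonal subgroup, $U$ the unipotent radical); and, transporting $\Psi$ to $P$, the restriction of $\Psi$ to $L$ is an isomorphism onto $L(M)$ and $\Psi(U)=U(M)$.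
   Context: $\Gamma$ is the quiver $1\to2\to\cdots\to n$; representations are finite-dimensional over $\mathbb{C}$; $M[i,j]$ is the indecomposable supported on $[i,j]$; $M[i,j]\le M[k,\ell]$ iff $i\le k$ and $j\le\ell$; $M$ is catenoid if its pairwise non-isomorphic indecomposable summands are totally ordered by $\le$ (equivalently lie on an oriented path of the Auslander--Reiten quiver). Let $0\to Q\xrightarrow{\iota}R\xrightarrow{\pi}M\to0$ be the minimal projective resolution, $\mathcal{P}_M=\{f\in\mathrm{Aut}_\Gamma(R)\mid f\circ\iota=\iota\}$, and $\Psi:\mathcal{P}_M\to\mathrm{Aut}_\Gamma(M)$, $\Psi(f)(m)=\pi(f(x))$ for $x\in\pi^{-1}(m)$. Write $M=M_1\oplus\cdots\oplus M_N$ with $M_i$ indecomposable, and let $P^i$ be the projective cover of $M_i$, so $R=P^1\oplus\cdots\oplus P^N$, indexed so that $P^1\le\cdots\le P^N$ (in the catenoid case, with $M_1\le\cdots\le M_N$). Let $\rho_{ij}$ be a generator of $\mathrm{Hom}_\Gamma(P^j,P^i)$ (dimension at most one), $\Omega=\{(i,j)\mid\rho_{ij}\ne0\}$; the embedding $\mathrm{Aut}_\Gamma(R)\to GL_N$ sends $\sum_{(i,j)\in\Omega}b_{ij}\rho_{ij}$ to $\sum b_{ij}E_{ij}$. For each $i,j$ fix $\phi_{i,j}\in\mathrm{Hom}_\Gamma(M_j,M_i)$, nonzero if this space is nonzero, viewed in $\mathrm{End}_\Gamma(M)$. $L(M)=\prod_l\mathrm{Aut}_\Gamma(M(l)^{\oplus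 a_l})$ and $U(M)$ is the subgroup of $\mathrm{Aut}_\Gamma(M)$ generated by $\exp(z\phi_{i,j})$, $z\in\mathbb{C}$, for $M_i\not\cong M_j$. *)

(* Defs.v *)
From HB Require Import structures.
From mathcomp Require Import all_boot all_order all_algebra.
Unset Printing Implicit Defensive.
Import Order.TTheory GRing.Theory Num.Theory.
Local Open Scope ring_scope.

(* A representation is a family of vector spaces V_k = C^(vtx k) (k : nat,   *)
(* only the vertices 1..n will be nonempty for the representations used)     *)
(* together with linear maps V_k -> V_(k+1) given by their coefficient       *)
(* matrices, in the row-vector convention:                                   *)
(*   arr k x y = coefficient of basis vector y of V_(k+1) in the image of    *)
(*               basis vector x of V_k.                                      *)
Section Reps.
Context {C : fieldType}.

Record rep := Rep { vtx : nat -> finType ; arr : forall k, vtx k -> vtx k.+1 -> C }.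

(* linear maps V -> W, vertexwise, same row convention *)
Definition homf (V W : rep) := forall k, vtx V k -> vtx W k -> C.

Definition is_hom {V W : rep} (f : homf V W) : Prop :=
  forall k (x : vtx V k) (y : vtx W k.+1),
    \sum_(z : vtx W k) f k x z * arr W k z y
    = \sum_(z : vtx V k.+1) arr V k x z * f k.+1 z y.

(* functional composition: hcomp f g = f o g *)
Definition hcomp {U V W : rep} (f : homf V W) (g : homf U V) : homf U W :=
  fun k x y => \sum_(z : vtx V k) g k x z * f k z y.

Definition hid (V : rep) : homf V V := fun k x y => (x == y)%:R.

Definition hscale {V W : rep} (c : C) (f : homf V W) : homf V W :=
  fun k x y => c * f k x y.

Definition is_aut {V : rep} (f : homf V V) : Prop :=
  is_hom f /\ exists g : homf V V, is_hom g /\ hcomp f g = hid V /\ hcomp g f = hid V.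

(* for a nilpotent f with f^K = 0 this is exp(f)                             *)
Fixpoint hpow {V : rep} (f : homf V V) (m : nat) : homf V V :=
  if m is m'.+1 then hcomp f (hpow f m') else hid V.

Definition hexp_trunc {V : rep} (K : nat) (f : homf V V) : homf V V :=
  fun k x y => \sum_(m < K) (m`!%:R)^-1 * hpow f m k x y.

Definition is_aut_subgroup {V : rep} (H : homf V V -> Prop) : Prop :=
  [/\ (forall h, H h -> is_aut h), H (hid V),
      (forall f g, H f -> H g -> H (hcomp f g)) &
      (forall f, H f -> exists g, H g /\ hcomp f g = hid V)].

Definition gen_aut_subgroup {V : rep} (S : homf V V -> Prop) (g : homf V V) : Prop :=
  forall H, is_aut_subgroup H -> (forall h, S h -> H h) -> H g.

(* Direct sums of interval modules:  isum s t = (+)_(i<N) M[s i, t i], where *)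
(* M[a,b] has C at the vertices a <= k <= b and identity maps between them.  *)
(* The basis of the vertex space at k is {i : 'I_N | s i <= k <= t i}.        *)
(* (If t i < s i the summand is 0.)                                          *)
Definition isum_vtx {N : nat} (s t : 'I_N -> nat) (k : nat) : finType :=
  {i : 'I_N | (s i <= k <= t i)%N}.

Definition isum {N : nat} (s t : 'I_N -> nat) : rep :=
  @Rep (isum_vtx s t) (fun k x y => (sval x == sval y)%:R).

(* The setting of the proposition.  The summands are M_i = M[sM i, tM i]     *)
(* (i < N).  The minimal projective resolution 0 -> Q -> R -> M -> 0:        *)
(*  P^i = M[sM i, n] is the projective cover of M_i, R = (+)_i P^i,          *)
(*  Q = (+)_i M[tM i + 1, n] (the summand is 0 when tM i = n),               *)
Section Setting.
Variables (n N : nat) (sM tM : 'I_N -> nat).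

Definition Mrep : rep := isum sM tM.
Definition Rrep : rep := isum sM (fun _ => n).
Definition Qrep : rep := isum (fun i => (tM i).+1) (fun _ => n).

Definition iota_res : homf Qrep Rrep := fun k x y => (sval x == sval y)%:R.
Definition pi_res : homf Rrep Mrep := fun k x y => (sval x == sval y)%:R.
(* a vertexwise linear section of pi_res (used to pick x in pi^-1(m)) *)
Definition sec_res : homf Mrep Rrep := fun k x y => (sval x == sval y)%:R.

Definition PM (f : homf Rrep Rrep) : Prop :=
  is_aut f /\ exists g : homf Qrep Qrep, is_aut g /\ hcomp f iota_res = hcomp iota_res g.

(* Psi(f)(m) = pi(f(x)) for x in pi^-1(m) *)
Definition Psi (f : homf Rrep Rrep) : homf Mrep Mrep :=
  hcomp pi_res (hcomp f sec_res).

(* rho i j : P^j -> P^i, generator of Hom(P^j, P^i) (nonzero iff sM i <= sM j),*)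
(* viewed in End(R) : sends the basis vector of P^j to that of P^i.           *)
Definition rho (i j : 'I_N) : homf Rrep Rrep :=
  fun k x y => ((sval x == j) && (sval y == i))%:R.

Definition Omega (i j : 'I_N) : bool := (sM i <= sM j)%N.

(* inverse of the embedding Aut(R) -> GL_N : B |-> sum_(i,j) in Omega B_ij rho_ij *)
Definition emb_inv (B : 'M[C]_N) : homf Rrep Rrep :=
  fun k x y => \sum_(i < N) \sum_(j < N | Omega i j) B i j * rho i j k x y.

Definition Pimg (B : 'M[C]_N) : Prop :=
  (forall i j, ~~ Omega i j -> B i j = 0) /\ PM (emb_inv B).

End Setting.

(* closedness is automatic for subgroups of GL_N containing a Borel.)        *)
Definition mx_subgroup {N : nat} (P : 'M[C]_N -> Prop) : Prop :=
  [/\ (forall B, P B -> B \in unitmx), P 1%:M,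
      (forall A B, P A -> P B -> P (A *m B)) &
      (forall A, P A -> P (invmx A))].

Definition upper_borel {N : nat} (B : 'M[C]_N) : Prop :=
  B \in unitmx /\ (forall i j : 'I_N, (j < i)%N -> B i j = 0).

Definition parabolic {N : nat} (P : 'M[C]_N -> Prop) : Prop :=
  mx_subgroup P /\
  exists g : 'M[C]_N, g \in unitmx /\
    forall B, upper_borel B -> P (g *m B *m invmx g).

End Reps.
Arguments rep : clear implicits.
Arguments isum C {N}.
Arguments Mrep C {N}.
Arguments Rrep C n {N}.
Arguments Qrep C n {N}.
Arguments iota_res C n {N} sM tM k _ _.
Arguments pi_res C n {N} sM tM k _ _.
Arguments sec_res C n {N} sM tM k _ _.
Arguments PM C n {N} sM tM f.
Arguments Psi C n {N} sM tM f k _ _.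
Arguments rho C n {N} sM i j k _ _.
Arguments Omega {N} sM i j.
Arguments emb_inv C n {N} sM B k _ _.
Arguments Pimg C n {N} sM tM B.

(* (0-based: number of complete blocks lying before position i).             *)
Definition block_idx {r : nat} (a : 'I_r -> nat) (i : nat) : nat :=
  (\sum_(l < r) ((\sum_(l' < r | (l' <= l)%N) a l') <= i))%N.

Section Parabolics.
Context {C : fieldType} {r N : nat}.
Variable a : 'I_r -> nat.

Definition std_parabolic (B : 'M[C]_N) : Prop :=
  B \in unitmx /\
  forall i j : 'I_N, (block_idx a j < block_idx a i)%N -> B i j = 0.

Definition std_levi (B : 'M[C]_N) : Prop :=
  B \in unitmx /\
  forall i j : 'I_N, block_idx a i != block_idx a j -> B i j = 0.

Definition std_unip (B : 'M[C]_N) : Prop :=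
  (forall i j : 'I_N, (block_idx a j < block_idx a i)%N -> B i j = 0) /\
  (forall i j : 'I_N, block_idx a i = block_idx a j -> B i j = (i == j)%:R).
End Parabolics.

Definition iv_le (i j k l : nat) : bool := (i <= k)%N && (j <= l)%N.

Definition catenoid {r : nat} (s t : 'I_r -> nat) : Prop :=
  forall l l' : 'I_r, iv_le (s l) (t l) (s l') (t l') || iv_le (s l') (t l') (s l) (t l).

(* The subgroups L(M) and U(M) of Aut(M), for M = (+)_(i<N) M_i with          *)
(* M_i = M[sM i, tM i] isomorphic to M(typ i).                                *)
Section LU.
Context {C : fieldType} {N r : nat} {sM tM : 'I_N -> nat}.
Variable typ : 'I_N -> 'I_r.

(* a morphism of M lying in Hom(M_j, M_i) (viewed in End(M)) *)
Definition supported_in (j i : 'I_N) (f : homf (Mrep C sM tM) (Mrep C sM tM)) : Prop :=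
  forall k (x y : vtx (Mrep C sM tM) k), f k x y != 0 -> sval x = j /\ sval y = i.

(* L(M) = prod_l Aut(M(l)^(a_l)) : automorphisms preserving each isotypic    *)
(* component M(l)^(a_l)                                                      *)
Definition LM (g : homf (Mrep C sM tM) (Mrep C sM tM)) : Prop :=
  is_aut g /\
  forall k (x y : vtx (Mrep C sM tM) k), typ (sval x) != typ (sval y) -> g k x y = 0.

(* phi_ij is nilpotent and every vertex space of M has dimension <= N, so     *)
(* the exponential series truncated at N+1 terms is exp.                     *)
Definition UM (phi : 'I_N -> 'I_N -> homf (Mrep C sM tM) (Mrep C sM tM))
    (g : homf (Mrep C sM tM) (Mrep C sM tM)) : Prop :=
  gen_aut_subgroup
    (fun h => exists (i j : 'I_N) (z : C),
         typ i != typ j /\ h = hexp_trunc N.+1 (hscale z (phi i j))) g.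
End LU.

(* Main.v *)
Require Import Defs.
From HB Require Import structures.
From mathcomp Require Import all_boot all_order all_algebra.
From mathcomp Require Import fingroup perm.
From mathcomp Require Import zify ring.
From Stdlib Require Import FunctionalExtensionality.
Import Order.TTheory GRing.Theory Num.Theory.
Local Open Scope ring_scope.
Set Implicit Arguments.
Unset Strict Implicit.

Lemma homf_ext {C : fieldType} (V W : rep C) (f g : homf V W) :
  (forall k x y, f k x y = g k x y) -> f = g.
Proof.
move=> H; apply: functional_extensionality_dep => k.
apply: functional_extensionality => x; apply: functional_extensionality => y; exact: H.
Qed.

Lemma inv_closed (F : fieldType) n (A : 'M[F]_n) (P : 'M[F]_n -> Prop) :
  P 1%:M -> (forall X Y, P X -> P Y -> P (X + Y)) -> (forall c X, P X -> P (c *: X)) ->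
  (forall X, P X -> P (A *m X)) -> A \in unitmx -> P (invmx A).
Proof.
case: n A P => [|n] A P P1 PD PZ PA hA.
  by rewrite [invmx A]flatmx0 -[0](flatmx0 1%:M).
have P0 : P 0 by rewrite -(scale0r 1%:M); exact: PZ.
have PX i : P (A ^+ i).
  elim: i => [|i IH]; first by rewrite expr0.
  by rewrite exprS -mulmxE; exact: PA.
set p := char_poly A.
have CH := Cayley_Hamilton A.
rewrite -/p -[p]coefK poly_def rmorph_sum /= in CH.
have sz : size p = n.+2 by rewrite size_char_poly.
rewrite sz big_ord_recl /= in CH.
set S := \sum_(i < n.+1) p`_i.+1 *: A ^+ i.
have E0 : p`_0 *: 1%:M + A *m S = 0.
  rewrite -[RHS]CH.
  rewrite linearZ /= rmorph1; congr (_ + _).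
    by rewrite expr0 rmorph1.
  by rewrite /S mulmxE mulr_sumr; apply: eq_bigr => i _; rewrite linearZ /= rmorphXn /= horner_mx_X -scalerAr -exprS.
have E : A *m S = - (p`_0) *: 1%:M.
  by apply/eqP; rewrite scaleNr -addr_eq0 addrC E0.
have c0 : p`_0 != 0.
  rewrite /p char_poly_det mulf_eq0 negb_or signr_eq0 /=.
  by rewrite unitmxE unitfE in hA.
have -> : invmx A = - (p`_0)^-1 *: S.
  have AX : A *m (- (p`_0)^-1 *: S) = 1%:M.
    by rewrite -scalemxAr E scalerA mulNr mulrN opprK mulVf // scale1r.
  by rewrite -[invmx A]mulmx1 -AX mulKmx.
apply: (PZ); rewrite /S; elim/big_ind: _ => //.
by move=> i _; exact: PZ.
Qed.

Section Supp.
Variables (F : fieldType) (N : nat) (r : rel 'I_N).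
Definition supp (B : 'M[F]_N) := forall i j, ~~ r i j -> B i j = 0.

Lemma supp_nz B i j : supp B -> B i j != 0 -> r i j.
Proof. by move=> hB; apply: contraR => h; rewrite hB. Qed.

Lemma supp1 : reflexive r -> supp 1%:M.
Proof. by move=> hr i j h; rewrite mxE; case: eqP => // e; rewrite e hr in h. Qed.

Lemma suppD A B : supp A -> supp B -> supp (A + B).
Proof. by move=> hA hB i j h; rewrite mxE hA ?hB ?addr0. Qed.

Lemma suppZ c A : supp A -> supp (c *: A).
Proof. by move=> hA i j h; rewrite mxE hA ?mulr0. Qed.

Lemma suppM A B : transitive r -> supp A -> supp B -> supp (A *m B).
Proof.
move=> tr hA hB i j h; rewrite mxE big1 // => k _.
case: (boolP (r i k)) => h1; last by rewrite hA ?mul0r.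
case: (boolP (r k j)) => h2; last by rewrite (hB k j) ?mulr0.
by move: h; rewrite (tr _ _ _ h1 h2).
Qed.

Lemma suppV A : reflexive r -> transitive r -> supp A -> A \in unitmx -> supp (invmx A).
Proof.
move=> rr tr hA uA; apply: (inv_closed (P := supp)) => //.
- exact: supp1.
- by move=> X Y; apply: suppD.
- by move=> c X; apply: suppZ.
- by move=> X; apply: suppM.
Qed.
End Supp.

Section Gen.
Variable F : fieldType.

Lemma sum_delta (I : finType) (P : pred I) (G : I -> F) y :
  \sum_(i | P i) G i * (i == y)%:R = if P y then G y else 0.
Proof.
rewrite big_mkcond (bigD1 y) //= big1 ?addr0.
  by case: (P y); rewrite ?eqxx ?mulr1.
by move=> i /negbTE ->; case: (P i); rewrite ?mulr0.
Qed.

Lemma sum_delta' (I : finType) (P : pred I) (G : I -> F) y :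
  \sum_(i | P i) (y == i)%:R * G i = if P y then G y else 0.
Proof.
rewrite -(@sum_delta _ P G y); apply: eq_bigr => i _; by rewrite mulrC eq_sym.
Qed.

Variable N : nat.
Variables s t : 'I_N -> nat.
Notation V := (isum F s t).
Definition inV k (i : 'I_N) : bool := (s i <= k <= t i)%N.

Lemma sum_vtx k (G : 'I_N -> F) :
  \sum_(z : vtx V k) G (val z) = \sum_(i | inV k i) G i.
Proof.
have E := @big_sub_cond F 0 +%R _ (fun i => inV k i) xpredT G.
rewrite /= in E. symmetry. rewrite big_mkcondr /= in E. exact E.
Qed.

Definition mkv k i (h : inV k i) : vtx V k :=
  exist (fun i0 : 'I_N => (s i0 <= k <= t i0)%N) i h.
Arguments mkv {k i} h.

Lemma val_mkv k i (h : inV k i) : sval (mkv h) = i.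
Proof. by []. Qed.

Lemma inV_val k (x : vtx V k) : inV k (sval x).
Proof. exact: (svalP x). Qed.

Definition coef (f : homf V V) k j i : F :=
  match (insub j : option (vtx V k)), (insub i : option (vtx V k)) with
  | Some x, Some y => f k x y
  | _, _ => 0 end.

Lemma coefE f k (x y : vtx V k) : coef f k (sval x) (sval y) = f k x y.
Proof. by rewrite /coef !valK. Qed.

Lemma coef0 f k j i : ~~ inV k j || ~~ inV k i -> coef f k j i = 0.
Proof.
rewrite /coef => /orP[] h.
  by rewrite (insubF _ (negbTE h)).
by case: (insub j : option (vtx V k)) => // x; rewrite (insubF _ (negbTE h)).
Qed.

Definition mat_hom (B : 'M[F]_N) : homf V V := fun k x y => B (sval y) (sval x).

Definition rel_st (i j : 'I_N) : bool := (s i <= s j)%N && (t i <= t j)%N.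

Lemma is_hom_mat (B : 'M[F]_N) : supp rel_st B -> is_hom (mat_hom B).
Proof.
move=> hB k x y; rewrite /mat_hom /=.
rewrite (sum_vtx k (fun i => B i (sval x) * (i == sval y)%:R)) sum_delta.
rewrite (sum_vtx k.+1 (fun i => (sval x == i)%:R * B (sval y) i)) sum_delta'.
have hx := inV_val x; have hy := inV_val y.
case: (boolP (rel_st (sval y) (sval x))) => r; last by rewrite hB //; case: ifP; case: ifP.
move: r hx hy; rewrite /rel_st /inV => /andP[r1 r2] /andP[x1 x2] /andP[y1 y2].
have -> : (s (sval y) <= k <= t (sval y))%N by apply/andP; split; lia.
have -> : (s (sval x) <= k.+1 <= t (sval x))%N by apply/andP; split; lia.
by [].
Qed.


Lemma rel_st_refl : reflexive rel_st.
Proof. by move=> i; rewrite /rel_st !leqnn. Qed.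

Lemma rel_st_trans : transitive rel_st.
Proof.
move=> j i k; rewrite /rel_st => /andP[a b] /andP[c d]; apply/andP; split; lia.
Qed.

Lemma hcomp_mat B B' : supp rel_st B -> supp rel_st B' ->
  hcomp (mat_hom B) (mat_hom B') = mat_hom (B *m B').
Proof.
move=> hB hB'; apply: homf_ext => k x y; rewrite /hcomp /mat_hom mxE.
rewrite (sum_vtx k (fun i => B' i (sval x) * B (sval y) i)).
rewrite big_mkcond; apply: eq_bigr => i _ /=; rewrite mulrC.
case: ifP => // hi.
case: (boolP (rel_st i (sval x))) => h1; last by rewrite (hB' i) ?mulr0.
case: (boolP (rel_st (sval y) i)) => h2; last by rewrite hB ?mul0r.
move: hi h1 h2 (inV_val x) (inV_val y); rewrite /rel_st /inV.
move=> /negbT /nandP [] /negP h /andP[h1 h1'] /andP[h2 h2'] /andP[x1 x2] /andP[y1 y2];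
  case: h; lia.
Qed.

Lemma mat_hom1 : mat_hom 1%:M = hid V.
Proof.
apply: homf_ext => k x y; rewrite /mat_hom /hid mxE eq_sym.
by [].
Qed.

Lemma is_aut_mat B : supp rel_st B -> B \in unitmx -> is_aut (mat_hom B).
Proof.
move=> hB uB; split; first exact: is_hom_mat.
have hV : supp rel_st (invmx B) by apply: suppV => //; [exact: rel_st_refl | exact: rel_st_trans].
exists (mat_hom (invmx B)); split; first exact: is_hom_mat.
by rewrite !hcomp_mat // ?mulmxV ?mulVmx // mat_hom1.
Qed.

Lemma hom_step f k j i : is_hom f -> inV k j -> inV k.+1 i ->
  (if inV k i then coef f k j i else 0) = (if inV k.+1 j then coef f k.+1 j i else 0).
Proof.
move=> hf hj hi; have := hf k (mkv hj) (mkv hi).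
rewrite /=.
under eq_bigr => z _ do rewrite -coefE.
under [in RHS]eq_bigr => z _ do rewrite -coefE.
rewrite (sum_vtx k (fun w => coef f k j w * (w == i)%:R)) sum_delta.
rewrite (sum_vtx k.+1 (fun w => (j == w)%:R * coef f k.+1 w i)) sum_delta'.
by [].
Qed.

Lemma hom_const f j i k1 k2 : is_hom f -> (k1 <= k2)%N ->
  inV k1 j -> inV k1 i -> inV k2 j -> inV k2 i -> coef f k1 j i = coef f k2 j i.
Proof.
move=> hf; elim: k2 => [|k2 IH] h12 a b c d.
  by have -> : k1 = 0%N by lia.
case: (ltngtP k1 k2.+1) => [lt|gt|->] //; last by lia.
have c' : inV k2 j by move: a c; rewrite /inV => /andP[? ?] /andP[? ?]; apply/andP; split; lia.
have d' : inV k2 i by move: b d; rewrite /inV => /andP[? ?] /andP[? ?]; apply/andP; split; lia.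
rewrite (IH _ a b c' d'); last by lia.
by have := hom_step hf c' d; rewrite d' c.
Qed.

Lemma hcomp_hid (W : rep F) (f : homf W W) : hcomp f (hid W) = f.
Proof.
apply: homf_ext => k x y; rewrite /hcomp /hid.
by rewrite (@sum_delta' _ xpredT (fun z => f k z y) x).
Qed.

Lemma hcomp_hidl (W : rep F) (f : homf W W) : hcomp (hid W) f = f.
Proof.
apply: homf_ext => k x y; rewrite /hcomp /hid.
by rewrite (@sum_delta _ xpredT (fun z => f k x z) y).
Qed.

End Gen.
Arguments mat_hom {F N} s t B.
Arguments mkv F {N} s t {k i} h.

Lemma supp_sub (F : fieldType) N (r r' : rel 'I_N) (B : 'M[F]_N) :
  (forall i j, r i j -> r' i j) -> supp r B -> supp r' B.
Proof. by move=> h hB i j hr; apply: hB; apply: contra hr; apply: h. Qed.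

Section Setting.
Variables (C : fieldType) (n N : nat) (sM tM : 'I_N -> nat).
Hypothesis hst : forall i, (sM i <= tM i <= n)%N.
Notation cn := (fun _ : 'I_N => n).
Notation tQ := (fun i : 'I_N => (tM i).+1).
Notation rst := (rel_st sM tM).

Lemma emb_mat (B : 'M[C]_N) : supp (Omega sM) B -> emb_inv C n sM B = mat_hom sM cn B.
Proof.
move=> hO; apply: homf_ext => k x y; rewrite /emb_inv /mat_hom /rho.
have E : forall i, \sum_(j < N | Omega sM i j) B i j * ((sval x == j) && (sval y == i))%:R
   = B i (sval x) * (i == sval y)%:R.
  move=> i; rewrite big_mkcond /=.
  rewrite -(@sum_delta _ _ xpredT (fun j => B i j * (i == sval y)%:R) (sval x)).
  apply: eq_bigr => j _.
  case: (boolP (Omega sM i j)) => h; last by rewrite hO // !mul0r.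
  by rewrite [sval x == j]eq_sym [sval y == i]eq_sym; case: (j == sval x); case: (i == sval y); rewrite /= ?mulr0 ?mulr1.
under eq_bigr => i _ do rewrite E.
by rewrite (@sum_delta _ _ xpredT (fun i => B i (sval x)) (sval y)).
Qed.

Lemma Psi_mat (B : 'M[C]_N) : Psi C n sM tM (mat_hom sM cn B) = mat_hom sM tM B.
Proof.
apply: homf_ext => k x y; rewrite /Psi /hcomp /pi_res /sec_res /mat_hom.
have inR : forall (z : vtx (Mrep C sM tM) k), inV sM cn k (sval z).
  move=> z; have := inV_val z; rewrite /inV => /andP[a b]; have := hst (sval z).
  move=> /andP[c d]; apply/andP; split; lia.
under eq_bigr => z _ do rewrite (sum_vtx sM cn k (fun w => (sval x == w)%:R * B (sval z) w)) sum_delta' inR.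
by rewrite (sum_vtx sM cn k (fun w => B w (sval x) * (w == sval y)%:R)) sum_delta inR.
Qed.


Lemma Psi_emb (B : 'M[C]_N) : supp (Omega sM) B ->
  Psi C n sM tM (emb_inv C n sM B) = mat_hom sM tM B.
Proof. by move=> h; rewrite emb_mat // Psi_mat. Qed.

Lemma rst_Omega i j : rst i j -> Omega sM i j.
Proof. by rewrite /rel_st /Omega => /andP[]. Qed.

Lemma char (B : 'M[C]_N) : Pimg C n sM tM B <-> B \in unitmx /\ supp rst B.
Proof.
split.
- move=> [hO [[hom [G [hG [e1 e2]]]] [g [ag eq]]]].
  rewrite emb_mat // in e1 eq hom.
  split.
  + pose B' := \matrix_(i, j) coef G n j i.
    suff : B *m B' = 1%:M by case/mulmx1_unit.
    apply/matrixP => b a; rewrite !mxE.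
    have ha : inV sM cn n a by rewrite /inV; have := hst a; case/andP => ? ?; apply/andP; split; lia.
    have hb : inV sM cn n b by rewrite /inV; have := hst b; case/andP => ? ?; apply/andP; split; lia.
    have := congr1 (fun f => f n (mkv C sM cn ha) (mkv C sM cn hb)) e1.
    rewrite /hcomp /mat_hom /hid /=.
    under eq_bigr => z _ do rewrite -coefE.
    rewrite (sum_vtx sM cn n (fun w => coef G n a w * B b w)) /= => E.
    have allin : forall w, inV sM cn n w by move=> w; have := hst w; rewrite /inV => /andP[? ?]; apply/andP; split; lia.
    rewrite (eq_bigl xpredT) in E; last by move=> w; rewrite allin.
    rewrite eq_sym -E; apply: eq_bigr => w _; rewrite mxE mulrC.
    by [].
  + move=> i j; rewrite /rel_st negb_and => /orP[h|h].
      by apply: hO; rewrite /Omega.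
    case: (boolP (Omega sM i j)) => hij; last by apply: hO.
    rewrite -ltnNge in h.
    have hx : inV tQ cn (tM i) j.
      rewrite /inV; have := hst i; have := hst j; move=> /andP[? ?] /andP[? ?]; apply/andP; split; lia.
    have hy : inV sM cn (tM i) i.
      rewrite /inV; have := hst i; move=> /andP[? ?]; apply/andP; split; lia.
    have := congr1 (fun f : homf (Qrep C n tM) (Rrep C n sM) => f (tM i) (mkv C tQ cn hx) (mkv C sM cn hy)) eq.
    rewrite /hcomp /mat_hom /iota_res /=.
    under [in RHS]eq_bigr => z _ do rewrite -coefE.
    rewrite (sum_vtx sM cn (tM i) (fun w => (j == w)%:R * B i w)) sum_delta'.
    rewrite (sum_vtx tQ cn (tM i) (fun w => coef g (tM i) j w * (w == i)%:R)) sum_delta.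
    have -> : inV tQ cn (tM i) i = false by rewrite /inV ltnn.
    have -> : inV sM cn (tM i) j = true.
      rewrite /inV; have := hst i; have := hst j; move: hij; rewrite /Omega => ? /andP[? ?] /andP[? ?]; apply/andP; split; lia.
    by [].
- move=> [uB hB].
  have hO : supp (Omega sM) B.
    by apply: (supp_sub _ hB) => i j; apply: rst_Omega.
  have hR : supp (rel_st sM cn) B.
    by apply: (supp_sub _ hB) => i j; rewrite /rel_st leqnn andbT => /andP[].
  have hQ : supp (rel_st tQ cn) B.
    by apply: (supp_sub _ hB) => i j; rewrite /rel_st leqnn andbT ltnS => /andP[].
  split => //; rewrite emb_mat //; split; first exact: is_aut_mat.
  exists (mat_hom tQ cn B); split; first exact: is_aut_mat.
  apply: homf_ext => k x y; rewrite /hcomp /mat_hom /iota_res.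
  rewrite (sum_vtx sM cn k (fun w => (sval x == w)%:R * B (sval y) w)) sum_delta'.
  rewrite (sum_vtx tQ cn k (fun w => B w (sval x) * (w == sval y)%:R)) sum_delta.
  have -> : inV sM cn k (sval x).
    have := inV_val x; have := hst (sval x); rewrite /inV => /andP[? ?] /andP[? ?]; apply/andP; split; lia.
  case: ifP => // hy.
  apply: hB; apply: contraFN hy; rewrite /rel_st => /andP[_ h].
  have := inV_val x; have := inV_val y; rewrite /inV => /andP[? ?] /andP[? ?]; apply/andP; split; lia.
Qed.

End Setting.

Lemma rank_perm N (key : 'I_N -> nat) : injective key ->
  exists p : {perm 'I_N}, forall u v, (key u < key v)%N -> (p u < p v)%N.
Proof.
move=> ki.
pose rk u := #|[set w | (key w < key u)%N]|.
have rkN u : (rk u < N)%N.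
  rewrite /rk -[X in (_ < X)%N]card_ord -cardsT; apply: proper_card.
  apply/properP; split; first by apply/subsetP.
  by exists u => //; rewrite inE ltnn.
have mono u v : (key u < key v)%N -> (rk u < rk v)%N.
  move=> h; apply: proper_card; apply/properP; split.
    by apply/subsetP => w; rewrite !inE => hw; apply: ltn_trans hw h.
  by exists u; rewrite !inE ?ltnn ?h.
pose f u := Ordinal (rkN u).
have finj : injective f.
  move=> u v /(congr1 val) /= e.
  case: (ltngtP (key u) (key v)) => h; last exact: ki.
    by have := mono _ _ h; rewrite e ltnn.
  by have := mono _ _ h; rewrite e ltnn.
by exists (perm finj) => u v h; rewrite !permE /=; exact: mono.
Qed.

Section Part1.
Variables (C : numFieldType) (n N : nat) (sM tM : 'I_N -> nat).
Hypothesis hst : forall i, (sM i <= tM i <= n)%N.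
Notation rst := (rel_st sM tM).

Lemma part1_to : (forall i j, rst i j || rst j i) -> parabolic (Pimg C n sM tM).
Proof.
move=> tot; split.
  split.
  - by move=> B /(char hst) [].
  - apply/(char hst); split; [exact: unitmx1 | exact: supp1 (@rel_st_refl _ _ _)].
  - move=> A B /(char hst) [uA hA] /(char hst) [uB hB]; apply/(char hst); split.
      by rewrite unitmx_mul uA uB.
    exact: suppM (@rel_st_trans _ _ _) hA hB.
  - move=> A /(char hst) [uA hA]; apply/(char hst); split; first by rewrite unitmx_inv.
    by apply: suppV => //; [exact: rel_st_refl | exact: rel_st_trans].
pose key u := ((sM u + tM u) * N + u)%N.
have ki : injective key.
  move=> u v /(congr1 (modn^~ N)); rewrite /key !modnMDl !modn_small ?ltn_ord // => e.
  exact: val_inj.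
have [p hp] := rank_perm ki.
have kl u v : ~~ rst u v -> (key v < key u)%N.
  move=> h; have := tot u v; rewrite (negbTE h) /= /rel_st => /andP[h1 h2].
  move: h; rewrite /rel_st negb_and -!ltnNge => h.
  have hv := ltn_ord v; rewrite /key.
  case/orP: h => h; nia.
pose g := \matrix_(i, j) (p i == j)%:R : 'M[C]_N.
pose g' := \matrix_(i, j) (p j == i)%:R : 'M[C]_N.
have gg : g *m g' = 1%:M.
  apply/matrixP => i j; rewrite !mxE.
  under eq_bigr => k _ do rewrite !mxE.
  rewrite (@sum_delta' _ _ xpredT (fun k => (p j == k)%:R) (p i)) /=.
  by rewrite (inj_eq perm_inj) eq_sym.
have ug : g \in unitmx by case/mulmx1_unit: gg.
have ig : invmx g = g' by rewrite -[invmx g]mulmx1 -gg mulKmx.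
exists g; split => // B [uB lB].
have E u v : (g *m B *m invmx g) u v = B (p u) (p v).
  rewrite ig mxE.
  under eq_bigr => k _ do rewrite !mxE.
  under eq_bigr => k _ do under eq_bigr => l _ do rewrite !mxE.
  under eq_bigr => k _ do rewrite (@sum_delta' _ _ xpredT (fun l => B l k) (p u)) /=.
  under eq_bigr => k _ do rewrite eq_sym.
  by rewrite (@sum_delta _ _ xpredT (fun k => B (p u) k) (p v)) /=.
apply/(char hst); split; first by rewrite !unitmx_mul ug uB unitmx_inv ug.
by move=> u v h; rewrite E; apply: lB; apply: hp; apply: kl.
Qed.


Lemma gEh (g h : 'M[C]_N) a b u v :
  (g *m delta_mx a b *m h) u v = g u a * h b v.
Proof.
rewrite mxE.
under eq_bigr => y _ do rewrite mxE.
under eq_bigr => y _ do under eq_bigr => z _ do rewrite mxE.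
have e y : \sum_z g u z * ((z == a) && (y == b))%:R = g u a * (y == b)%:R.
  rewrite (eq_bigr (fun z => (g u z * (y == b)%:R) * (z == a)%:R)).
    by rewrite (@sum_delta _ _ xpredT (fun z => g u z * (y == b)%:R) a).
  by move=> z _; case: (z == a); case: (y == b); rewrite /= ?mulr0 ?mulr1.
under eq_bigr => y _ do rewrite e.
rewrite (eq_bigr (fun y => (g u a * h y v) * (y == b)%:R)).
  by rewrite (@sum_delta _ _ xpredT (fun y => g u a * h y v) b).
by move=> y _; rewrite mulrAC.
Qed.

Lemma part1_from : parabolic (Pimg C n sM tM) -> forall i j, rst i j || rst j i.
Proof.
move=> [_ [g [ug hg]]] i j.
set h := invmx g.
have key (a b u v : 'I_N) : (a <= b)%N -> g u a * h b v != 0 -> rst u v.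
  move=> ab nz.
  pose E := delta_mx a b : 'M[C]_N.
  pose d : C := (b == a)%:R.
  pose c : C := (1 + d)^-1.
  have c1 : 1 + d != 0 by rewrite /d addrC natr1 pnatr_eq0.
  have EE : E *m E = d *: E by rewrite mul_delta_mx_cond scaler_nat.
  have ub : upper_borel (1%:M + E).
    split.
      have : (1%:M + E) *m (1%:M - c *: E) = 1%:M.
        rewrite mulmxDl !mulmxBr !mul1mx mulmx1 -scalemxAr EE scalerA.
        apply/matrixP => x y; rewrite !mxE.
        set e := ((x == a) && (y == b))%:R.
        transitivity ((x == y)%:R + e * (1 - c * (1 + d)) : C); first by ring.

        by rewrite /c mulVf // subrr mulr0 addr0.
      by case/mulmx1_unit.
    move=> x y yx; rewrite !mxE.
    have -> : (x == y) = false by apply/negbTE; rewrite neq_ltn yx orbT.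
    case: (boolP ((x == a) && (y == b))) => [/andP[/eqP ex /eqP ey]|_]; last by rewrite addr0.
    by move: yx ab; rewrite ex ey => p q; lia.
  have := hg _ ub; case/(char hst) => _ hs.
  case: (eqVneq u v) => [->|uv]; first exact: rel_st_refl.
  apply: (supp_nz (B := g *m (1%:M + E) *m invmx g)) => //.
  rewrite mulmxDr mulmx1 mulmxDl mulmxV // mxE gEh mxE (negbTE uv) /= add0r.
  by [].
have diag u : exists b, g u b * h b u != 0.
  case: (pickP (fun b => g u b * h b u != 0)) => [b hb | none]; first by exists b.
  have : (g *m h) u u = 0.
    by rewrite mxE big1 // => b _; apply/eqP; move: (none b) => /negbFE.
  by rewrite mulmxV // mxE eqxx /= => /eqP; rewrite oner_eq0.
have [bi hi] := diag i; have [bj hj] := diag j.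
move: hi hj; rewrite !mulf_eq0 !negb_or => /andP[gi hi] /andP[gj hj].
case: (leqP bi bj) => le.
  by rewrite (key bi bj i j le) // mulf_neq0.
by rewrite (key bj bi j i (ltnW le)) ?orbT // mulf_neq0.
Qed.

End Part1.

Section Part2.
Variables (C : fieldType) (n N r : nat) (sM tM : 'I_N -> nat) (typ : 'I_N -> 'I_r).
Hypothesis hst : forall i, (sM i <= tM i <= n)%N.
Notation rst := (rel_st sM tM).
Hypothesis hD1 : forall i j, rst i j = (typ i <= typ j)%N.
Notation M := (Mrep C sM tM).
Notation PsiE B := (Psi C n sM tM (emb_inv C n sM B)).

Lemma same_st i j : typ i = typ j -> sM i = sM j /\ tM i = tM j.
Proof.
move=> e; have := hD1 i j; have := hD1 j i; rewrite e leqnn /rel_st.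
by move=> /andP[? ?] /andP[? ?]; split; apply/eqP; rewrite eqn_leq; apply/andP; split.
Qed.

Lemma inV_self j : inV sM tM (sM j) j.
Proof. by rewrite /inV leqnn /=; have := hst j => /andP[]. Qed.

Lemma inV_same j i k : typ i = typ j -> inV sM tM k j -> inV sM tM k i.
Proof. by move=> /same_st [si ti]; rewrite /inV si ti. Qed.

Definition lev (B : 'M[C]_N) := B \in unitmx /\ forall i j, typ i != typ j -> B i j = 0.

Lemma lev_supp (B : 'M[C]_N) : (forall i j, typ i != typ j -> B i j = 0) -> supp rst B.
Proof.
move=> hB i j; rewrite hD1 -ltnNge => h; apply: hB.
by apply/eqP => e; move: h; rewrite e ltnn.
Qed.

Lemma supp_Om (B : 'M[C]_N) : supp rst B -> supp (Omega sM) B.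
Proof. by move=> h; apply: (supp_sub _ h) => i j; apply: rst_Omega. Qed.

Lemma lev_LM B : lev B -> LM typ (PsiE B).
Proof.
move=> [uB hB]; have hs := lev_supp hB.
rewrite Psi_emb //; last exact: supp_Om.
split; first exact: is_aut_mat.
by move=> k x y h; rewrite /mat_hom; apply: hB; rewrite eq_sym.
Qed.

Lemma lev_inj B B' : lev B -> lev B' -> PsiE B = PsiE B' -> B = B'.
Proof.
move=> [uB hB] [uB' hB'].
rewrite !Psi_emb //; try by apply: supp_Om; apply: lev_supp.
move=> e; apply/matrixP => i j.
case: (eqVneq (typ i) (typ j)) => t; last by rewrite hB // hB'.
have hj := inV_self j; have hi := inV_same t hj.
have := congr1 (fun f : homf M M => f (sM j) (mkv C sM tM hj) (mkv C sM tM hi)) e.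
by rewrite /mat_hom.
Qed.

Lemma lev_mul B B' : lev B -> lev B' -> PsiE (B *m B') = hcomp (PsiE B) (PsiE B').
Proof.
move=> [uB hB] [uB' hB'].
have s1 := lev_supp hB; have s2 := lev_supp hB'.
have s3 : supp rst (B *m B') by apply: suppM => //; exact: rel_st_trans.
rewrite !Psi_emb //; try by apply: supp_Om.
by rewrite hcomp_mat.
Qed.

Lemma lev_surj g : LM typ g -> exists B, lev B /\ PsiE B = g.
Proof.
move=> [[hg [G [hG [e1 e2]]]] hz].
have hzc k j i : typ j != typ i -> coef g k j i = 0.
  move=> h; case: (boolP (inV sM tM k j && inV sM tM k i)) => [/andP[hj hi]|h'].
    rewrite -[j]/(sval (mkv C sM tM hj)) -[i]/(sval (mkv C sM tM hi)) coefE.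
    by apply: hz.
  by apply: coef0; rewrite -negb_and.
pose B : 'M[C]_N := \matrix_(i, j) if typ i == typ j then coef g (sM j) j i else 0.
pose B' : 'M[C]_N := \matrix_(i, j) if typ i == typ j then coef G (sM j) j i else 0.
have hB : forall i j, typ i != typ j -> B i j = 0 by move=> i j h; rewrite mxE (negbTE h).
have BB : B *m B' = 1%:M.
  apply/matrixP => b a; rewrite !mxE.
  case: (eqVneq (typ b) (typ a)) => tba; last first.
    rewrite big1; last first.
      move=> z _; rewrite !mxE.
      case: (eqVneq (typ b) (typ z)) => [e|]; last by rewrite mul0r.
      by rewrite -e (negbTE tba) mulr0.
    by case: eqP => // eba; move: tba; rewrite eba eqxx.
  have ha := inV_self a; have hb := inV_same tba ha.
  have := congr1 (fun f : homf M M => f (sM a) (mkv C sM tM ha) (mkv C sM tM hb)) e1.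
  rewrite /hcomp /hid /=.
  under eq_bigr => z _ do rewrite -[G _ _ z]coefE -[g _ z _]coefE.
  rewrite (sum_vtx sM tM (sM a) (fun w => coef G (sM a) a w * coef g (sM a) w b)) /= => E.
  have -> : (b == a) = (mkv C sM tM ha == mkv C sM tM hb) by rewrite eq_sym.
  rewrite -E [RHS]big_mkcond; apply: eq_bigr => z _; rewrite !mxE.
  case: (eqVneq (typ b) (typ z)) => tbz.
    have tza : typ z = typ a by rewrite -tbz.
    rewrite (inV_same tza ha) -tbz tba eqxx.
    have [-> _] := same_st tza.
    by rewrite mulrC.
  rewrite mul0r; case: ifP => // _.
  by rewrite hzc ?mulr0 // eq_sym.
have uB : B \in unitmx by case/mulmx1_unit: BB.
exists B; split; first by split.
rewrite (Psi_emb hst); last by apply: supp_Om; apply: lev_supp.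
apply: homf_ext => k x y; rewrite /mat_hom mxE.
case: (eqVneq (typ (sval y)) (typ (sval x))) => t; last by rewrite hz // eq_sym.
rewrite -coefE; apply: hom_const => //.
- by have := inV_val x; rewrite /inV => /andP[].
- exact: inV_self.
- by apply: (inV_same t); exact: inV_self.
- exact: inV_val.
- exact: inV_val.
Qed.

End Part2.

Definition hzero {F : fieldType} (V : rep F) : homf V V := fun _ _ _ => 0.
Arguments hzero {F} V.

Lemma hcomp0 {F : fieldType} (V : rep F) (f : homf V V) : hcomp f (hzero V) = hzero V.
Proof. by apply: homf_ext => k x y; rewrite /hcomp /hzero big1 // => z _; rewrite mul0r. Qed.

Section Part2U.
Variables (C : fieldType) (n N r : nat) (sM tM : 'I_N -> nat) (typ : 'I_N -> 'I_r).
Hypothesis hst : forall i, (sM i <= tM i <= n)%N.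
Notation rst := (rel_st sM tM).
Hypothesis hD1 : forall i j, rst i j = (typ i <= typ j)%N.
Hypothesis hmono : forall i j : 'I_N, (i <= j)%N -> (typ i <= typ j)%N.
Notation M := (Mrep C sM tM).
Notation PsiE B := (Psi C n sM tM (emb_inv C n sM B)).

Definition unip (B : 'M[C]_N) :=
  (forall i j, (typ j < typ i)%N -> B i j = 0) /\
  (forall i j, typ i = typ j -> B i j = (i == j)%:R).

Definition rtyp : rel 'I_N := fun i j => (typ i <= typ j)%N.

Lemma unip_rtyp B : unip B -> supp rtyp B.
Proof. by move=> [h _] i j; rewrite /rtyp -ltnNge; apply: h. Qed.

Lemma rtyp_rst (B : 'M[C]_N) : supp rtyp B -> supp rst B.
Proof. by move=> h; apply: (supp_sub _ h) => i j; rewrite hD1. Qed.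

Lemma unip_supp B : unip B -> supp rst B.
Proof. by move=> h; apply: rtyp_rst; apply: unip_rtyp. Qed.

Lemma unip_unit B : unip B -> B \in unitmx.
Proof.
move=> [h1 h2].
have tr : is_trig_mx B^T.
  apply/is_trig_mxP => i j ij; rewrite mxE.
  have := hmono (ltnW ij); rewrite leq_eqVlt => /orP[/eqP e|lt]; last exact: h1.
  rewrite h2; last by apply: val_inj.
  by case: eqP => // e'; move: ij; rewrite e' ltnn.
rewrite unitmxE -det_tr det_trig // big1 ?unitr1 // => i _.
by rewrite mxE h2 // eqxx.
Qed.

Lemma unip1 : unip 1%:M.
Proof.
split=> i j h; rewrite mxE //.
by case: eqP => // e; move: h; rewrite e ltnn.
Qed.

Lemma rtyp_refl : reflexive rtyp.
Proof. by move=> i; rewrite /rtyp. Qed.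
Lemma rtyp_trans : transitive rtyp.
Proof. by move=> j i k; rewrite /rtyp; apply: leq_trans. Qed.

Lemma unip_mul B B' : unip B -> unip B' -> unip (B *m B').
Proof.
move=> hB hB'; split.
  by move=> i j h; apply: (suppM rtyp_trans (unip_rtyp hB) (unip_rtyp hB')); rewrite /rtyp -ltnNge.
move=> i j e; rewrite mxE.
rewrite (eq_bigr (fun z => (i == z)%:R * (z == j)%:R)).
  by rewrite (@sum_delta' _ _ xpredT (fun z => (z == j)%:R) i).
move=> z _.
case: (ltngtP (typ z) (typ i)) => h.
- rewrite hB.1 // mul0r; case: eqP => [ez|_]; [by move: h; rewrite ez ltnn | by rewrite mul0r].
- rewrite hB'.1 ?mulr0; last by rewrite -e.
  case: (eqVneq z j) => [ez|]; last by rewrite mulr0.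
  by move: h; rewrite ez e ltnn.
- have ez : typ z = typ i by apply: val_inj.
  by rewrite hB.2 // hB'.2 // ez.
Qed.

Lemma unip_inv B : unip B -> unip (invmx B).
Proof.
move=> hB; have uB := unip_unit hB.
have sX : supp rtyp (invmx B) by apply: suppV => //; [exact: rtyp_refl | exact: rtyp_trans | exact: unip_rtyp].
split; first by move=> i j h; apply: sX; rewrite /rtyp -ltnNge.
move=> i j e.
have := congr1 (fun X : 'M[C]_N => X i j) (mulmxV uB); rewrite !mxE => <-.
rewrite (eq_bigr (fun z => (i == z)%:R * invmx B z j)).
  by rewrite (@sum_delta' _ _ xpredT (fun z => invmx B z j) i).
move=> z _.
case: (ltngtP (typ z) (typ i)) => h.
- rewrite hB.1 // mul0r; case: eqP => [ez|_]; [by move: h; rewrite ez ltnn | by rewrite mul0r].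
- rewrite sX ?mulr0; last by rewrite /rtyp -ltnNge -e.
  by [].
- have ez : typ i = typ z by apply: val_inj.
  by rewrite hB.2.
Qed.

Lemma PsiE_unip B : unip B -> PsiE B = mat_hom sM tM B.
Proof.
move=> h; rewrite (Psi_emb hst) //.
by apply: (supp_sub _ (unip_supp h)) => i j; apply: rst_Omega.
Qed.

Lemma mat_hom0 : mat_hom sM tM (0 : 'M[C]_N) = hzero M.
Proof. by apply: homf_ext => k x y; rewrite /mat_hom mxE. Qed.

Lemma hexp_mat K (D : 'M[C]_N) : supp rst D -> D *m D = 0 ->
  hexp_trunc K.+2 (mat_hom sM tM D) = mat_hom sM tM (1%:M + D).
Proof.
move=> sD DD.
set f := mat_hom sM tM D.
have p2 m : hpow f m.+2 = hzero M.
  elim: m => [|m IH] /=.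
    by rewrite hcomp_hid /f hcomp_mat // DD mat_hom0.
  by rewrite -[hcomp f (hcomp f (hpow f m))]/(hpow f m.+2) IH hcomp0.
apply: homf_ext => k x y; rewrite /hexp_trunc big_ord_recl big_ord_recl big1.
  rewrite /= hcomp_hid -mat_hom1 /f /mat_hom !mxE.
  by rewrite invr1 !mul1r addr0.
move=> i _; rewrite /=.
by rewrite -[hcomp f (hcomp f _)]/(hpow f (0 + i).+2) p2 /hzero mulr0.
Qed.

Lemma hscale_mat z (D : 'M[C]_N) : hscale z (mat_hom sM tM D) = mat_hom sM tM (z *: D).
Proof. by apply: homf_ext => k x y; rewrite /hscale /mat_hom mxE. Qed.

End Part2U.

Unset Implicit Arguments.
Section Part2V.
Variables (C : fieldType) (n N r : nat) (sM tM : 'I_N -> nat) (typ : 'I_N -> 'I_r).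
Hypothesis hst : forall i, (sM i <= tM i <= n)%N.
Notation rst := (rel_st sM tM).
Hypothesis hD1 : forall i j, rst i j = (typ i <= typ j)%N.
Notation M := (Mrep C sM tM).
Variable phi : 'I_N -> 'I_N -> homf M M.
Hypothesis hphi_hom : forall i j, is_hom (phi i j).
Hypothesis hphi_supp : forall i j, supported_in j i (phi i j).

Lemma phiA i j : (typ i < typ j)%N ->
  exists l : C, phi i j = mat_hom sM tM (l *: delta_mx i j).
Proof.
move=> ij; exists (coef (phi i j) (sM j) j i).
have rij : rst i j by rewrite hD1 ltnW.
apply: homf_ext => k x y; rewrite /mat_hom !mxE.
case: (boolP ((sval y == i) && (sval x == j))) => [/andP[/eqP ey /eqP ex]|hne].
  rewrite mulr1 -coefE ex ey; symmetry.
  have hx := inV_val x; have hy := inV_val y; rewrite ex in hx; rewrite ey in hy.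
  move: (hx) (hy) rij; rewrite /inV /rel_st => /andP[x1 x2] /andP[y1 y2] /andP[r1 r2].
  have := hst j => /andP[sj1 sj2].
  apply: hom_const => //; rewrite ?/inV; try (apply/andP; split); lia.
rewrite mulr0; case: (eqVneq (phi i j k x y) 0) => // nz.
have [ex ey] := hphi_supp i j k x y nz.
by rewrite ex ey !eqxx in hne.
Qed.

Lemma phiB i j : (typ j < typ i)%N -> phi i j = hzero M.
Proof.
move=> ji; apply: homf_ext => k x y; rewrite /hzero.
case: (eqVneq (phi i j k x y) 0) => // nz.
have [ex ey] := hphi_supp i j k x y nz.
have rji : rst j i by rewrite hD1 ltnW.
have nrij : ~~ rst i j by rewrite hD1 -ltnNge.
move: nz; rewrite -coefE ex ey => nz.
have hx := inV_val x; have hy := inV_val y; rewrite ex in hx; rewrite ey in hy.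
set f := phi i j in nz.
have hf : is_hom f by exact: hphi_hom.
move: (hx) (hy) rji nrij; rewrite /inV /rel_st negb_and -!ltnNge => /andP[x1 x2] /andP[y1 y2] /andP[r1 r2] nr.
have hsi := hst i; have hsj := hst j; move: hsi hsj => /andP[si1 si2] /andP[sj1 sj2].
case: (ltngtP (sM j) (sM i)) => c.
- pose k0 := (sM i).-1.
  have e0 : k0.+1 = sM i by rewrite /k0; lia.
  have hj0 : inV sM tM k0 j by rewrite /inV /k0; apply/andP; split; lia.
  have hi1 : inV sM tM k0.+1 i by rewrite e0 /inV leqnn.
  have := hom_step hf hj0 hi1.
  have -> : inV sM tM k0 i = false by rewrite /inV /k0; apply/negbTE; rewrite negb_and -!ltnNge; apply/orP; left; lia.
  have -> : inV sM tM k0.+1 j = true by rewrite e0 /inV; apply/andP; split; lia.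
  rewrite e0 => E.
  have E2 : coef f (sM i) j i = coef f k j i.
    apply: hom_const => //; rewrite ?/inV; try (apply/andP; split); lia.
  by move: nz; rewrite -E2 -E eqxx.
- by lia.
- have c2 : (tM j < tM i)%N by case/orP: nr => h; lia.
  have hj0 : inV sM tM (tM j) j by rewrite /inV; apply/andP; split; lia.
  have hi1 : inV sM tM (tM j).+1 i by rewrite /inV; apply/andP; split; lia.
  have := hom_step hf hj0 hi1.
  have -> : inV sM tM (tM j) i = true by rewrite /inV; apply/andP; split; lia.
  have -> : inV sM tM (tM j).+1 j = false by rewrite /inV; apply/negbTE; rewrite negb_and -!ltnNge; apply/orP; right; lia.
  move=> E.
  have E2 : coef f k j i = coef f (tM j) j i.
    apply: hom_const => //; rewrite ?/inV; try (apply/andP; split); lia.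
  by move: nz; rewrite E2 E eqxx.
Qed.

End Part2V.
Set Implicit Arguments.

Lemma hexp_mat' (C : fieldType) N (sM tM : 'I_N -> nat) K (D : 'M[C]_N) :
  (1 < K)%N -> supp (rel_st sM tM) D -> D *m D = 0 ->
  hexp_trunc K (mat_hom sM tM D) = mat_hom sM tM (1%:M + D).
Proof. by case: K => [|[|K]] // _; apply: hexp_mat. Qed.

Lemma elemE (C : fieldType) N (p m : 'I_N) (a : C) (i j : 'I_N) :
  (1%:M + a *: delta_mx p m : 'M[C]_N) i j = (i == j)%:R + a * ((i == p) && (j == m))%:R.
Proof. by rewrite !mxE. Qed.

Unset Implicit Arguments.
Section Part2W.
Variables (C : fieldType) (n N r : nat) (sM tM : 'I_N -> nat) (typ : 'I_N -> 'I_r).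
Hypothesis hst : forall i, (sM i <= tM i <= n)%N.
Notation rst := (rel_st sM tM).
Hypothesis hD1 : forall i j, rst i j = (typ i <= typ j)%N.
Hypothesis hmono : forall i j : 'I_N, (i <= j)%N -> (typ i <= typ j)%N.
Notation M := (Mrep C sM tM).
Variable phi : 'I_N -> 'I_N -> homf M M.
Hypothesis hphi_hom : forall i j, is_hom (phi i j).
Hypothesis hphi_supp : forall i j, supported_in j i (phi i j).
Hypothesis hphi_nz : forall i j, (exists g : homf M M,
                  [/\ is_hom g, supported_in j i g & exists k x y, g k x y != 0]) ->
               exists k x y, phi i j k x y != 0.

Definition Sgen (h : homf M M) : Prop := exists (i j : 'I_N) (z : C),
         typ i != typ j /\ h = hexp_trunc N.+1 (hscale z (phi i j)).

Lemma elem_supp (p m : 'I_N) (a : C) : (typ p < typ m)%N ->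
  supp rst (a *: delta_mx p m).
Proof.
move=> pm i j h; rewrite !mxE.
case: (boolP ((i == p) && (j == m))) => [/andP[/eqP ei /eqP ej]|_]; last by rewrite mulr0.
by move: h; rewrite ei ej hD1 (ltnW pm).
Qed.

Lemma elem_sq (p m : 'I_N) (a : C) : (typ p < typ m)%N ->
  (a *: delta_mx p m) *m (a *: delta_mx p m) = 0.
Proof.
move=> pm; rewrite -scalemxAl -scalemxAr mul_delta_mx_cond.
have -> : (m == p) = false by apply/negbTE; apply/eqP => e; move: pm; rewrite e ltnn.
by rewrite mulr0n !scaler0.
Qed.

Lemma N_gt1 (i j : 'I_N) : typ i != typ j -> (1 < N.+1)%N.
Proof. by move=> _; rewrite ltnS; apply: (leq_ltn_trans (leq0n i)). Qed.

Lemma gen_elem (H : homf M M -> Prop) : is_aut_subgroup H -> (forall h, Sgen h -> H h) ->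
  forall (p m : 'I_N) (c : C), (typ p < typ m)%N -> H (mat_hom sM tM (1%:M + c *: delta_mx p m)).
Proof.
move=> [_ H1 _ _] HS p m c pm.
have [l hl] := phiA C n N r sM tM typ hst hD1 phi hphi_hom hphi_supp p m pm.
have tpm : typ p != typ m by apply/eqP => e; move: pm; rewrite e ltnn.
case: (eqVneq l 0) => l0.
  have Z : forall k x y, mat_hom sM tM (c *: delta_mx p m) k x y = 0.
    move=> k x y; apply/eqP; apply: contraT => nz.
    have := hphi_nz p m.
    case.
      exists (mat_hom sM tM (c *: delta_mx p m)); split.
      - by apply: is_hom_mat; apply: elem_supp.
      - move=> k' x' y'; rewrite /mat_hom !mxE.
        case: (boolP ((sval y' == p) && (sval x' == m))) => [/andP[/eqP ? /eqP ?]|]; first by [].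
        by rewrite mulr0 eqxx.
      - by exists k, x, y.
    move=> k' [x' [y']]; rewrite hl l0 scale0r /mat_hom mxE eqxx.
    by [].
  have -> : mat_hom sM tM (1%:M + c *: delta_mx p m) = hid M.
    rewrite -mat_hom1; apply: homf_ext => k x y.
    have := Z k x y; rewrite /mat_hom => Zk; by rewrite [in LHS]mxE Zk addr0.
  exact: H1.
apply: HS; exists p, m, (c / l); split => //.
rewrite hl hscale_mat scalerA divfK // hexp_mat' //.
- exact: (N_gt1 p m tpm).
- exact: elem_supp.
- exact: elem_sq.
Qed.


Lemma mul_delta_entry (A : 'M[C]_N) (p m i j : 'I_N) :
  (A *m delta_mx p m) i j = A i p * (j == m)%:R.
Proof.
rewrite mxE.
rewrite (eq_bigr (fun z => (A i z * (j == m)%:R) * (z == p)%:R)).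
  by rewrite (@sum_delta _ _ xpredT (fun z => A i z * (j == m)%:R) p).
by move=> z _; rewrite mxE; case: (z == p); case: (j == m); rewrite /= ?mulr0 ?mulr1.
Qed.

Lemma HM (H : homf M M -> Prop) (A B : 'M[C]_N) : is_aut_subgroup H ->
  supp rst A -> supp rst B -> H (mat_hom sM tM A) -> H (mat_hom sM tM B) ->
  H (mat_hom sM tM (A *m B)).
Proof. by move=> [_ _ hM _] sA sB hA hB; rewrite -hcomp_mat //; apply: hM. Qed.

Lemma unip_nz (B : 'M[C]_N) z m : unip typ B -> z != m -> B z m != 0 -> (z < m)%N.
Proof.
move=> [h1 h2] zm nz.
have tz : (typ z < typ m)%N.
  case: (ltngtP (typ z) (typ m)) => // c.
    by move: nz; rewrite h1 ?eqxx.
  by move: nz; rewrite h2 ?(negbTE zm) ?eqxx //; apply: val_inj.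
rewrite ltnNge; apply/negP => mz; have := hmono _ _ mz; rewrite leqNgt tz.
by [].
Qed.

Definition Vcol (B : 'M[C]_N) (m : 'I_N) : 'M[C]_N :=
  \matrix_(i, j) if (j == m) && (i != m) then B i j else 0.

Lemma gen_col (H : homf M M -> Prop) (HH : is_aut_subgroup H) (HS : forall h, Sgen h -> H h)
  (B : 'M[C]_N) (hB : unip typ B) (m : 'I_N) : H (mat_hom sM tM (1%:M + Vcol B m)).
Proof.
have sB := unip_supp hD1 hB.
have H1 : H (hid M) by case: HH.
pose W q : 'M[C]_N := \matrix_(i, j) ((i == j)%:R + (if [&& j == m, i != m & (i < q)%N] then B i j else 0)).
have sW q : supp rst (W q).
  move=> i j h; rewrite mxE; case: eqP => [e|_]; first by rewrite e rel_st_refl in h.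
  by rewrite add0r; case: ifP => // _; apply: sB.
have Wq : forall q, (q <= N)%N -> H (mat_hom sM tM (W q)).
  elim => [|q IH] hq.
    have -> : W 0%N = 1%:M by apply/matrixP => i j; rewrite !mxE ltn0 !andbF addr0.
    by rewrite mat_hom1.
  pose p : 'I_N := Ordinal hq.
  pose c : C := if p != m then B p m else 0.
  have cpos : c != 0 -> (typ p < typ m)%N.
    rewrite /c; case: (eqVneq p m) => [->|pm0]; first by rewrite eqxx.
    move=> nz; have [h1 h2] := hB.
    case: (ltngtP (typ p) (typ m)) => // cc.
      by move: nz; rewrite h1 ?eqxx.
    by move: nz; rewrite h2 ?(negbTE pm0) ?eqxx //; apply: val_inj.
  have sE : supp rst (1%:M + c *: delta_mx p m).
    apply: suppD; first exact: supp1 (@rel_st_refl _ _ _).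
    case: (eqVneq c 0) => c0.
      by rewrite c0 => i j _; rewrite !mxE mul0r.
    by apply: elem_supp; apply: cpos.
  have He : H (mat_hom sM tM (1%:M + c *: delta_mx p m)).
    case: (eqVneq c 0) => c0; first by rewrite c0 scale0r addr0 mat_hom1.
    apply: (gen_elem H HH HS).
    exact: cpos.
  have E : W q.+1 = W q *m (1%:M + c *: delta_mx p m).
    apply/matrixP => i j; rewrite mulmxDr mulmx1 -scalemxAr [RHS]mxE [X in _ = _ + X]mxE.
    rewrite mul_delta_entry !mxE.
    case: (eqVneq j m) => [->|jm]; last by rewrite /= !mulr0 !addr0.
    rewrite /= !mulr1 /c.
    case: (eqVneq p m) => [pm|pm] /=.
      rewrite mul0r addr0.
      case: (eqVneq i m) => [//|im] /=.
      rewrite ltnS leq_eqVlt.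
      have -> : (nat_of_ord i == q) = false.
        apply/negbTE; apply: contra im => /eqP e; apply/eqP; apply: val_inj.
        by rewrite /= e -pm /p.
      by [].
    rewrite addr0.
    case: (eqVneq i p) => [ip|ip].
      rewrite ip (negbTE pm) /= /p /= ltnn ltnS leqnn /= mulr1.
      by rewrite !add0r.
    rewrite ltnS leq_eqVlt.
    have -> : (nat_of_ord i == q) = false.
      by apply/negbTE; apply: contra ip => /eqP e; apply/eqP; apply: val_inj.
    by rewrite mulr0 addr0.
  rewrite E; apply: HM => //; first exact: IH (ltnW hq).
have -> : 1%:M + Vcol B m = W N.
  by apply/matrixP => i j; rewrite !mxE ltn_ord andbT.
exact: Wq.
Qed.


Lemma gen_unip (H : homf M M -> Prop) (HH : is_aut_subgroup H) (HS : forall h, Sgen h -> H h)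
  (B : 'M[C]_N) (hB : unip typ B) : H (mat_hom sM tM B).
Proof.
have sB := unip_supp hD1 hB.
have H1 : H (hid M) by case: HH.
pose G m : 'M[C]_N := \matrix_(i, j) if (m <= j)%N then B i j else (i == j)%:R.
have sG m : supp rst (G m).
  move=> i j h; rewrite mxE; case: ifP => _; first exact: sB.
  by case: eqP => // e; rewrite e rel_st_refl in h.
have sV m : supp rst (1%:M + Vcol B m).
  apply: suppD; first exact: supp1 (@rel_st_refl _ _ _).
  by move=> i j h; rewrite mxE; case: ifP => // _; apply: sB.
have claim : forall d, (d <= N)%N -> H (mat_hom sM tM (G (N - d)%N)).
  elim => [|d IH] hd.
    have -> : G (N - 0)%N = 1%:M.
      by apply/matrixP => i j; rewrite !mxE subn0 leqNgt ltn_ord.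
    by rewrite mat_hom1.
  have hm : (N - d.+1 < N)%N by lia.
  pose m : 'I_N := Ordinal hm.
  have em : (N - d)%N = m.+1 by rewrite /m /=; lia.
  have E : G (N - d.+1)%N = G (N - d)%N *m (1%:M + Vcol B m).
    apply/matrixP => i j; rewrite mulmxDr mulmx1 [RHS]mxE.
    have -> : (G (N - d)%N *m Vcol B m) i j = Vcol B m i j.
      rewrite mxE (eq_bigr (fun z => (i == z)%:R * Vcol B m z j)).
        by rewrite (@sum_delta' _ _ xpredT (fun z => Vcol B m z j) i).
      move=> z _; rewrite [Vcol B m z j]mxE.
      case: (boolP ((j == m) && (z != m))) => [/andP[/eqP ej zm]|_]; last by rewrite !mulr0.
      case: (eqVneq (B z j) 0) => [->|nz]; first by rewrite !mulr0.
      have zl : (z < m)%N by apply: (unip_nz B z m hB zm); rewrite -ej.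
      by rewrite mxE em leqNgt ltnS (ltnW zl).
    rewrite !mxE em.
    have em' : (N - d.+1)%N = m by [].
    rewrite em'.
    case: (eqVneq j m) => [->|jm] /=.
      rewrite leqnn ltnn.
      case: (eqVneq i m) => [->|im] /=.
        by rewrite (hB.2 m m) // eqxx addr0.
      by rewrite add0r.
    rewrite addr0; congr (if _ then _ else _).
    rewrite leq_eqVlt; case: (eqVneq (m : nat) j) => //= e.
    by move: jm; rewrite -(inj_eq val_inj) /= e eqxx.
  rewrite E; apply: HM => //; first by apply: IH; lia.
  exact: gen_col.
have := claim N (leqnn N); rewrite subnn.
have -> : G 0%N = B by apply/matrixP => i j; rewrite mxE.
by [].
Qed.

Lemma UM_char (g : homf M M) :
  gen_aut_subgroup Sgen g <-> exists B, unip typ B /\ mat_hom sM tM B = g.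
Proof.
split.
  move=> hg.
  pose H0 := fun h : homf M M => exists B, unip typ B /\ mat_hom sM tM B = h.
  apply: (hg H0).
    split.
    - move=> h [B [hB <-]]; apply: (@is_aut_mat C N sM tM B); [exact (unip_supp hD1 hB) | exact (unip_unit hmono hB)].
    - by exists 1%:M; split; [exact: unip1 | exact: mat_hom1].
    - move=> f h [B [hB <-]] [B' [hB' <-]]; exists (B *m B'); split; first exact: unip_mul.
      by rewrite hcomp_mat //; [exact (unip_supp hD1 hB) | exact (unip_supp hD1 hB')].
    - move=> f [B [hB <-]]; exists (mat_hom sM tM (invmx B)); split.
        by exists (invmx B); split => //; exact (unip_inv hmono hB).
      rewrite hcomp_mat ?mulmxV ?mat_hom1 //.
      + exact (unip_unit hmono hB).
      + exact (unip_supp hD1 hB).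
      + exact (unip_supp hD1 (unip_inv hmono hB)).
  move=> h [i [j [z [tij ->]]]].
  case: (ltngtP (typ i) (typ j)) => c.
  - have [l ->] := phiA C n N r sM tM typ hst hD1 phi hphi_hom hphi_supp i j c.
    rewrite hscale_mat scalerA.
    exists (1%:M + (z * l) *: delta_mx i j); split; last first.
      rewrite hexp_mat' //; [exact: (N_gt1 i j tij) | exact: elem_supp | exact: elem_sq].
    split => u v hh; rewrite !mxE.
      have -> : (u == v) = false by apply/negbTE; apply/eqP => e; move: hh; rewrite e ltnn.
      case: (boolP ((u == i) && (v == j))) => [/andP[/eqP eu /eqP ev]|_]; last by rewrite mulr0 addr0.
      by move: hh c; rewrite eu ev => h1 h2; lia.
    case: (boolP ((u == i) && (v == j))) => [/andP[/eqP eu /eqP ev]|_]; last by rewrite mulr0 addr0.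
    by move: hh c; rewrite eu ev => ->; rewrite ltnn.
  - rewrite (phiB C n N r sM tM typ hst hD1 phi hphi_hom hphi_supp i j c) -mat_hom0 hscale_mat scaler0.
    exists 1%:M; split; first exact: unip1.
    rewrite hexp_mat' ?addr0 //; first exact: (N_gt1 i j tij).
    + by move=> u v _; rewrite mxE.
    + by rewrite mulmx0.
  - by move: tij; rewrite (val_inj c) eqxx.
move=> [B [hB <-]] H HH HS.
exact: gen_unip.
Qed.

End Part2W.

Theorem proposition2p5 (C : numClosedFieldType) (n r N : nat)
    (s t a : 'I_r -> nat) (typ : 'I_N -> 'I_r) :
  let sM := fun i : 'I_N => s (typ i) in
  let tM := fun i : 'I_N => t (typ i) in
  let M := Mrep C sM tM in
  forall phi : 'I_N -> 'I_N -> homf M M,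
  (forall l, (1 <= s l <= t l)%N /\ (t l <= n)%N) ->
  (forall l l', s l = s l' -> t l = t l' -> l = l') ->
  (forall l, (0 < a l)%N) ->
  (forall l, #|[set i | typ i == l]| = a l) ->
  (forall i j : 'I_N, (i <= j)%N -> (sM i <= sM j)%N) ->
  (forall i j, is_hom (phi i j)) ->
  (forall i j, supported_in j i (phi i j)) ->
  (forall i j, (exists g : homf M M,
                  [/\ is_hom g, supported_in j i g & exists k x y, g k x y != 0]) ->
               exists k x y, phi i j k x y != 0) ->
  (catenoid s t <-> parabolic (Pimg C n sM tM)) /\
  ((forall l l' : 'I_r, (l < l')%N -> iv_le (s l) (t l) (s l') (t l')) ->
   (forall i : 'I_N, nat_of_ord (typ i) = block_idx a i) ->
   (forall B, Pimg C n sM tM B <-> std_parabolic a B) /\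
   [/\ forall B, std_levi a B -> LM typ (Psi C n sM tM (emb_inv C n sM B)),
       forall B B', std_levi a B -> std_levi a B' ->
         Psi C n sM tM (emb_inv C n sM B) = Psi C n sM tM (emb_inv C n sM B') -> B = B',
       forall g, LM typ g -> exists B, std_levi a B /\ Psi C n sM tM (emb_inv C n sM B) = g,
       forall B B', std_levi a B -> std_levi a B' ->
         Psi C n sM tM (emb_inv C n sM (B *m B'))
         = hcomp (Psi C n sM tM (emb_inv C n sM B)) (Psi C n sM tM (emb_inv C n sM B')) &
       forall g, UM typ phi g <-> exists B, std_unip a B /\ Psi C n sM tM (emb_inv C n sM B) = g]).
Proof.
move=> sM tM M phi H1 H2 H3 H4 H5 Hhom Hsupp Hnz.
have hst : forall i, (sM i <= tM i <= n)%N.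
  by move=> i; have [/andP[_ ->] ->] := H1 (typ i).
have ex l : exists i, typ i = l.
  have : (0 < #|[set i | typ i == l]|)%N by rewrite H4 H3.
  by case/card_gt0P => i; rewrite inE => /eqP <-; exists i.
split.
  split.
    move=> cat; apply: part1_to => // i j; exact: cat (typ i) (typ j).
  move=> par l l'; have [i <-] := ex l; have [j <-] := ex l'.
  exact: (part1_from hst par i j).
move=> Hord Htyp.
have hD1 : forall i j, rel_st sM tM i j = (typ i <= typ j)%N.
  move=> i j; apply/idP/idP.
    move=> rij; rewrite leqNgt; apply/negP => lt.
    have := Hord _ _ lt; rewrite /iv_le => /andP[a1 a2].
    move: rij; rewrite /rel_st /sM /tM => /andP[b1 b2].
    have e : typ j = typ i by apply: H2; apply/eqP; rewrite eqn_leq ?a1 ?b1 ?a2 ?b2.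
    by move: lt; rewrite e ltnn.
  rewrite leq_eqVlt => /orP[/eqP e|lt].
    by rewrite /rel_st /sM /tM (val_inj e) !leqnn.
  exact: Hord.
have hmono : forall i j : 'I_N, (i <= j)%N -> (typ i <= typ j)%N.
  move=> i j ij; rewrite !Htyp /block_idx; apply: leq_sum => l _.
  by case: (leqP _ i) => // h; rewrite (leq_trans h ij).
have levE B : std_levi a B <-> lev typ B.
  rewrite /std_levi /lev; split => [[u h]|[u h]]; split => // i j hh.
    by apply: h; rewrite -!Htyp (inj_eq val_inj).
  by apply: h; move: hh; rewrite -!Htyp (inj_eq val_inj).
have unipE B : std_unip a B <-> unip typ B.
  rewrite /std_unip /unip; split => [[h1 h2]|[h1 h2]]; split => i j hh.
  - by apply: h1; rewrite -!Htyp.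
  - by apply: h2; rewrite -!Htyp hh.
  - by apply: h1; rewrite -!Htyp in hh.
  - by apply: h2; apply: val_inj; rewrite /= !Htyp.
split.
  move=> B; rewrite (char hst); rewrite /std_parabolic.
  split => [[u h]|[u h]]; split => // i j.
    by rewrite -!Htyp => lt; apply: h; rewrite hD1 -ltnNge.
  by rewrite hD1 -ltnNge => lt; apply: h; rewrite -!Htyp.
split.
- by move=> B /levE hB; apply: (lev_LM hst hD1).
- by move=> B B' /levE hB /levE hB'; apply: (lev_inj hst hD1).
- move=> g hg; have [B [hB e]] := lev_surj hst hD1 hg.
  by exists B; split => //; apply/levE.
- by move=> B B' /levE hB /levE hB'; apply: (lev_mul hst hD1).
- move=> g; rewrite /UM.
  have := UM_char C n N r sM tM typ hst hD1 hmono phi Hhom Hsupp Hnz g.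
  rewrite /Sgen => ->.
  split => [[B [hB e]]|[B [hB e]]]; exists B.
    by split; [apply/unipE | rewrite (PsiE_unip hst hD1 hB)].
  by move/unipE: hB => hB; split => //; rewrite -e (PsiE_unip hst hD1 hB).
Qed.
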